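(* Let $\mathcal{M}$ be a matroid on $[n]$, $J=J(\mathcal{M})$, and let $v$ be a vertex with $\{v\}$ independent in $\mathcal{M}$. Let $N\in G(J)$ with $x_v\mid N$. For every $\ell\ge1$ and every $L\in G\big(SF_\ell(J(\mathcal{M}/v):N)\big)$, we have $LN\in G(SF_{\ell+1}(J))$.
   Context: $R=\mathbb{K}[x_1,\ldots,x_n]$, $\mathbb{K}$ a field. For a matroid $\mathcal{N}$ on $E\subseteq[n]$, $J(\mathcal{N})=\bigcap_{F\in\mathcal{B}(\mathcal{N})}(x_i:i\in F)$, formed in $\mathbb{K}[x_i:i\in E]$ and extended to $R$. $\mathcal{M}/v$ is the contraction by $\{v\}$. $G(\cdot)$ denotes minimal monomial generators. For a squarefree monomial ideal $I$ with minimal primes $\mathfrak q_j$, $I^{(\ell)}=\bigcap\mathfrak q_j^\ell$ and $SF_\ell(I)$ is the ideal generated by the squarefree monomials in $I^{(\ell)}$. *)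

(* Defs.v *)
(* Monomial ideals of R = K[x_0,...,x_{n-1}] are modelled by
   the set of monomials they contain (a monomial ideal is determined by its
   monomials; the field K plays no role). *)
From mathcomp Require Import all_boot.
Set Implicit Arguments. Unset Strict Implicit. Unset Printing Implicit Defensive.

Definition is_matroid (n : nat) (B : {set {set 'I_n}}) : Prop :=
  B != set0 /\
  forall B1 B2, B1 \in B -> B2 \in B -> forall x, x \in B1 :\: B2 ->
    exists2 y, y \in B2 :\: B1 & (B1 :\ x) :|: [set y] \in B.

Definition indep (n : nat) (B : {set {set 'I_n}}) (I : {set 'I_n}) : Prop :=
  exists2 F, F \in B & I \subset F.

(* Contraction M/v (for {v} independent): bases are F \ {v}, F basis, v in F.
   Its ground set is [n] \ {v}. *)
Definition contract (n : nat) (B : {set {set 'I_n}}) (v : 'I_n) : {set {set 'I_n}} :=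
  [set F :\ v | F in B & v \in F].

Definition mono (n : nat) := {ffun 'I_n -> nat}.

Definition mmul (n : nat) (a b : mono n) : mono n := [ffun i => a i + b i].
Definition mdvd (n : nat) (a b : mono n) : Prop := forall i, a i <= b i.
Definition sqfree (n : nat) (a : mono n) : Prop := forall i, a i <= 1.

Definition mideal (n : nat) := mono n -> Prop.

Definition mingen (n : nat) (I : mideal n) (m : mono n) : Prop :=
  I m /\ forall m', I m' -> mdvd m' m -> m' = m.

Definition in_prime (n : nat) (S : {set 'I_n}) (m : mono n) : Prop :=
  exists2 i, i \in S & 0 < m i.

Definition in_prime_pow (n : nat) (S : {set 'I_n}) (l : nat) (m : mono n) : Prop :=
  l <= \sum_(i in S) m i.

Definition Jideal (n : nat) (B : {set {set 'I_n}}) : mideal n :=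
  fun m => forall F, F \in B -> in_prime F m.

Definition colon (n : nat) (I : mideal n) (N : mono n) : mideal n :=
  fun m => I (mmul m N).

Definition contains_ideal (n : nat) (S : {set 'I_n}) (I : mideal n) : Prop :=
  forall m, I m -> in_prime S m.
Definition minprime (n : nat) (I : mideal n) (S : {set 'I_n}) : Prop :=
  contains_ideal S I /\ forall S' : {set 'I_n}, S' \subset S -> contains_ideal S' I -> S' = S.

Definition sympow (n : nat) (I : mideal n) (l : nat) : mideal n :=
  fun m => forall S, minprime I S -> in_prime_pow S l m.

Definition SF (n : nat) (l : nat) (I : mideal n) : mideal n :=
  fun m => exists s, [/\ sqfree s, sympow I l s & mdvd s m].

(* Main.v *)
Require Import Defs.
From mathcomp Require Import all_boot.
From Stdlib Require Import Classical.
From mathcomp Require Import zify.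
Set Implicit Arguments. Unset Strict Implicit. Unset Printing Implicit Defensive.

Lemma sum_sub (T : finType) (A B : {set T}) (f : T -> nat) :
  A \subset B -> \sum_(i in A) f i <= \sum_(i in B) f i.
Proof.
move=> h; rewrite [X in _ <= X](big_setID A) /=.
have -> : B :&: A = A by apply/setIidPr.
exact: leq_addr.
Qed.

Definition ind (n : nat) (A : {set 'I_n}) : mono n := [ffun i => nat_of_bool (i \in A)].

Lemma incomp (n : nat) (B : {set {set 'I_n}}) : is_matroid B ->
  forall F1 F2, F1 \in B -> F2 \in B -> F1 \subset F2 -> F1 = F2.
Proof.
move=> [_ hM] F1 F2 F1B F2B h; apply/eqP; rewrite eqEsubset h /=.
apply/subsetP => x xF2; apply/negPn/negP => xF1.
have xin : x \in F2 :\: F1 by rewrite inE xF1 xF2.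
have [y] := hM F2 F1 F2B F1B x xin.
rewrite inE => /andP [yF2 yF1] _.
by move/negP: yF2; apply; apply: (subsetP h).
Qed.

Lemma J_contains (n : nat) (B : {set {set 'I_n}}) (S : {set 'I_n}) :
  contains_ideal S (Jideal B) -> exists2 F, F \in B & F \subset S.
Proof.
move=> hS; apply: NNPP => H.
have hJ : Jideal B (ind (~: S)).
  move=> F FB.
  have : ~~ (F \subset S) by apply/negP => sub; apply: H; exists F.
  case/subsetPn => i iF iS; exists i => //; by rewrite ffunE inE iS.
have [i iS] := hS _ hJ.
by rewrite ffunE inE iS.
Qed.

Theorem corollary4p15 (n : nat) (B : {set {set 'I_n}}) (hM : is_matroid B)
  (v : 'I_n) (hv : indep B [set v])
  (N : mono n) (hN : mingen (Jideal B) N) (hvN : 0 < N v)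
  (l : nat) (hl : 1 <= l)
  (L : mono n) (hL : mingen (SF l (colon (Jideal (contract B v)) N)) L) :
  mingen (SF l.+1 (Jideal B)) (mmul L N).
Proof.
have hNJ : Jideal B N := hN.1.
have hNsq : forall i, N i <= 1.
  move=> i.
  pose N' : mono n := [ffun j => minn (N j) 1].
  have JN' : Jideal B N'.
    move=> F FB; have [j jF Nj] := hNJ F FB; exists j => //.
    by rewrite ffunE leq_min Nj.
  have dv : mdvd N' N by move=> j; rewrite ffunE geq_minl.
  have E := hN.2 N' JN' dv.
  by rewrite -E ffunE geq_minr.
have hNc : forall c, 0 < N c -> exists2 F, F \in B & forall j, j \in F -> 0 < N j -> j = c.
  move=> c Nc; apply: NNPP => H.
  pose N' : mono n := [ffun j => if j == c then 0 else N j].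
  have JN' : Jideal B N'.
    move=> F FB; apply: NNPP => np; apply: H; exists F => // j jF Nj.
    apply/eqP; apply: contraT => jc; exfalso; apply: np; exists j => //.
    by rewrite ffunE (negbTE jc).
  have dv : mdvd N' N by move=> j; rewrite ffunE; case: ifP.
  have E := hN.2 N' JN' dv.
  by move: Nc; rewrite -E ffunE eqxx.
have [Lsq Lsym] : sqfree L /\ sympow (colon (Jideal (contract B v)) N) l L.
  have [[s [ssq ssym sdv]] hmin] := hL.
  have E : s = L by apply: hmin => //; exists s; split.
  by rewrite -E.
have F8 : forall S, contains_ideal S (colon (Jideal (contract B v)) N) ->
   exists F2, [/\ F2 \in B, v \in F2, (forall j, j \in F2 -> 0 < N j -> j = v) & F2 :\ v \subset S].
  move=> S hS; apply: NNPP => H.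
  have cm : colon (Jideal (contract B v)) N (ind (~: S)).
    move=> F' /imsetP [F2 F2in ->]; move: F2in; rewrite inE => /andP [F2B vF2].
    apply: NNPP => np; apply: H; exists F2; split => //.
    - move=> j jF2 Nj; apply/eqP; apply: contraT => jv; exfalso; apply: np.
      exists j; first by rewrite !inE jv jF2.
      by rewrite ffunE addn_gt0 Nj orbT.
    - apply/subsetP => j jF; apply/negPn/negP => jS; apply: np.
      exists j => //; by rewrite !ffunE inE jS.
  have [i iS] := hS _ cm.
  by move: iS; rewrite ffunE inE => ->.
pose good F := [/\ F \in B, v \in F & forall j, j \in F -> 0 < N j -> j = v].
have F4 : forall F, good F -> minprime (colon (Jideal (contract B v)) N) (F :\ v).
  move=> F [FB vF hF]; split.
  - move=> m cm.
    have Fin : F :\ v \in contract B v by apply: imset_f; rewrite inE FB vF.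
    have [i iF pos] := cm _ Fin; exists i => //.
    have Ni : N i = 0.
      apply/eqP; rewrite -leqn0 leqNgt; apply/negP => Npos.
      by move: iF; rewrite !inE => /andP [iv iF]; move: iv; rewrite (hF i iF Npos) eqxx.
    by move: pos; rewrite ffunE Ni addn0.
  - move=> S' sub hS'.
    have [F2 [F2B vF2 hF2 sub2]] := F8 S' hS'.
    have sF : F2 \subset F.
      apply/subsetP => j jF2; case: (eqVneq j v) => [->//|jv].
      have : j \in F2 :\ v by rewrite !inE jv jF2.
      by move/(subsetP sub2)/(subsetP sub); rewrite !inE => /andP [_ ->].
    have E := incomp hM F2B FB sF.
    by apply/eqP; rewrite eqEsubset sub -E sub2.
have Lbound : forall F, good F -> l <= \sum_(i in F :\ v) L i.
  by move=> F gF; apply: Lsym; apply: F4.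
have Lzero : forall x, (forall F, good F -> x \in F :\ v -> l < \sum_(i in F :\ v) L i) -> L x = 0.
  move=> x hx.
  pose L' : mono n := [ffun i => if i == x then 0 else L i].
  have dv : mdvd L' L by move=> i; rewrite ffunE; case: ifP.
  have SFL' : SF l (colon (Jideal (contract B v)) N) L'.
    exists L'; split => //.
    - by move=> i; rewrite ffunE; case: ifP => // _; exact: Lsq.
    - move=> S hS.
      have [F2 [F2B vF2 hF2 sub2]] := F8 S hS.1.
      have gF2 : good F2 by split.
      apply: leq_trans (sum_sub _ sub2).
      case: (boolP (x \in F2 :\ v)) => xin.
      + have := hx F2 gF2 xin.
        rewrite (big_setD1 _ xin) [X in _ -> _ <= X](big_setD1 _ xin) /= ffunE eqxx add0n.
        idtac.
        have := Lsq x; move=> Lx1 hlt; rewrite (eq_bigr L); last by move=> i; rewrite !inE ffunE => /andP [/negbTE -> _].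
        rewrite -ltnS; apply: (leq_trans hlt); by rewrite -add1n leq_add2r.
      + rewrite (eq_bigr L); first exact: Lbound.
        move=> i iin; rewrite ffunE; case: eqP => // eix.
        by move: xin; rewrite -eix iin.
  have E := hL.2 L' SFL' dv.
  by rewrite -E ffunE eqxx.
have LC : forall x, 0 < N x -> L x = 0.
  move=> x Nx; apply: Lzero => F [_ _ hF]; rewrite !inE => /andP [xv xF].
  by move: xv; rewrite (hF x xF Nx) eqxx.
have Lpos : forall x, 0 < L x -> exists F, [/\ good F, x \in F :\ v & \sum_(i in F :\ v) L i <= l].
  move=> x Lx; apply: NNPP => H.
  have : L x = 0.
    apply: Lzero => F gF xin; rewrite ltnNge; apply/negP => le; apply: H; exists F; by split.
  by move=> E; move: Lx; rewrite E.
have [Fv gFv] : exists Fv, good Fv.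
  have [Fv FvB hFv] := hNc v hvN.
  exists Fv; split => //.
  have [j jF Nj] := hNJ Fv FvB.
  by rewrite -(hFv j jF Nj).
have LNle1 : forall i, L i + N i <= 1.
  move=> i; case: (posnP (N i)) => [-> | Np]; first by rewrite addn0; exact: Lsq.
  by rewrite LC // add0n hNsq.
have [FvB vFv hFv] := gFv.
have base : forall F, F \in B -> #|F :&: ([set i | 0 < N i] :\ v)| = 0 ->
    l.+1 <= \sum_(i in F) (L i + N i).
  move=> F FB /eqP; rewrite cards_eq0 => /eqP F0.
  have hF : forall j, j \in F -> 0 < N j -> j = v.
    move=> j jF Nj; apply/eqP; apply: contraT => jv.
    have : j \in F :&: ([set i | 0 < N i] :\ v) by rewrite !inE jv jF Nj.
    by rewrite F0 inE.
  have vF : v \in F by have [j jF Nj] := hNJ F FB; rewrite -(hF j jF Nj).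
  have gF : good F by split.
  rewrite (big_setD1 _ vF) /=.
  have lb := Lbound F gF.
  have le : \sum_(i in F :\ v) L i <= \sum_(i in F :\ v) (L i + N i).
    by apply: leq_sum => i _; exact: leq_addr.
  rewrite -add1n; apply: leq_add; first exact: leq_trans hvN (leq_addl _ _).
  exact: leq_trans lb le.
have mem : forall k F, F \in B -> #|F :&: ([set i | 0 < N i] :\ v)| <= k ->
    l.+1 <= \sum_(i in F) (L i + N i).
  elim=> [|k IH] F FB hk.
    by apply: base FB _; apply/eqP; rewrite -leqn0.
  case: (posnP #|F :&: ([set i | 0 < N i] :\ v)|) => [c0|cpos]; first exact: base.
  move: (cpos); rewrite card_gt0 => /set0Pn [x xin].
  have xin' := xin; move: xin'; rewrite !inE => /andP [xF /andP [xv Nx]].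
  have xFv : x \notin Fv by apply/negP => xFv; move: xv; rewrite (hFv x xFv Nx) eqxx.
  have xd : x \in F :\: Fv by rewrite inE xFv xF.
  have [y] := hM.2 F Fv FB FvB x xd; rewrite inE => /andP [yF yFv] F'B.
  have hk' : #|((F :\ x) :|: [set y]) :&: ([set i | 0 < N i] :\ v)| <= k.
    have sub : ((F :\ x) :|: [set y]) :&: ([set i | 0 < N i] :\ v) \subset
               (F :&: ([set i | 0 < N i] :\ v)) :\ x.
      apply/subsetP => z; rewrite !inE => /andP [zF' /andP [zv Nz]].
      case/orP: zF' => [/andP [zx zF] | /eqP zy]; first by rewrite zx zF zv Nz.
      by move: zv; rewrite zy (hFv y yFv) ?eqxx // -zy.
    have h := subset_leq_card sub.
    move: hk; rewrite (cardsD1 x (F :&: ([set i | 0 < N i] :\ v))) xin add1n ltnS => hk''.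
    exact: leq_trans h hk''.
  have := IH _ F'B hk'.
  have E : ((F :\ x) :|: [set y]) :\ y = F :\ x.
    apply/setP => z; rewrite !inE; case: (eqVneq z y) => [->|] /=.
      by rewrite (negbTE yF) andbF.
    by rewrite orbF.
  have yF' : y \in (F :\ x) :|: [set y] by rewrite !inE eqxx orbT.
  rewrite (big_setD1 _ yF') E (big_setD1 _ xF) /=.
  move=> h; apply: leq_trans h _; rewrite leq_add2r (LC x Nx) add0n.
  exact: (leq_trans (LNle1 y) Nx).
have mem' : forall F, F \in B -> l.+1 <= \sum_(i in F) (L i + N i).
  by move=> F FB; apply: (mem _ F FB (leqnn _)).
have minprimeJ : forall F, F \in B -> minprime (Jideal B) F.
  move=> F FB; split; first by move=> m hm; exact: hm F FB.
  move=> S' sub hS'; have [F3 F3B sub3] := J_contains hS'.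
  have E := incomp hM F3B FB (subset_trans sub3 sub).
  by apply/eqP; rewrite eqEsubset sub -E sub3.
split.
  exists (mmul L N); split => //.
  - by move=> i; rewrite ffunE; exact: LNle1.
  - move=> S [hS _]; have [F FB sub] := J_contains hS.
    apply: leq_trans (sum_sub _ sub).
    rewrite (eq_bigr (fun i => L i + N i)); first exact: mem'.
    by move=> i _; rewrite ffunE.
have key : forall s : mono n, sqfree s -> sympow (Jideal B) l.+1 s ->
    (forall i, s i <= L i + N i) -> forall i, L i + N i <= s i.
  move=> s ssq ssym sle.
  have sB : forall F, F \in B -> l.+1 <= \sum_(i in F) s i.
    by move=> F FB; apply: ssym; exact: minprimeJ.
  have sLj : forall F, good F -> forall j, j \in F :\ v -> s j <= L j.
    move=> F [FB vF hF] j; rewrite !inE => /andP [jv jF].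
    have Nj : N j = 0.
      by apply/eqP; rewrite -leqn0 leqNgt; apply/negP => Np; move: jv; rewrite (hF j jF Np) eqxx.
    by have := sle j; rewrite Nj addn0.
  have sL : forall F, good F -> \sum_(i in F :\ v) s i <= \sum_(i in F :\ v) L i.
    by move=> F gF; apply: leq_sum => j; exact: sLj.
  move=> i; case: (posnP (N i)) => [Ni0 | Npos].
  - rewrite Ni0 addn0; case: (posnP (L i)) => [-> // | Lp].
    have [F2 [gF2 iin le]] := Lpos i Lp.
    have [F2B vF2 hF2] := gF2.
    have sB2 := sB F2 F2B.
    rewrite (big_setD1 _ vF2) (big_setD1 _ iin) /= in sB2.
    rewrite (big_setD1 _ iin) /= in le.
    have r : \sum_(j in F2 :\ v :\ i) s j <= \sum_(j in F2 :\ v :\ i) L j.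
      by apply: leq_sum => j; rewrite inE => /andP [_ jin]; exact: sLj gF2 j jin.
    move: sB2 le r; set Rs := \sum_(j in F2 :\ v :\ i) s j; set RL := \sum_(j in F2 :\ v :\ i) L j.
    have := ssq v; have := Lsq i; lia.
  - rewrite (LC i Npos) add0n.
    have [x _ Lx] : exists2 x, x \in Fv :\ v & 0 < L x.
      apply: NNPP => H.
      have E : \sum_(i in Fv :\ v) L i = 0.
        apply: big1 => x xin; apply/eqP; rewrite -leqn0 leqNgt; apply/negP => Lx.
        by apply: H; exists x.
      by move: (Lbound Fv gFv); rewrite E; lia.
    have [F2 [gF2 _ le]] := Lpos x Lx.
    have [F2B vF2 hF2] := gF2.
    have [F3 [F3B iF3 E3]] : exists F3, [/\ F3 \in B, i \in F3 & F3 :\ i = F2 :\ v].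
      case: (eqVneq i v) => [-> | iv]; first by exists F2.
      have [Fi FiB hFi] := hNc i Npos.
      have vFi : v \notin Fi.
        by apply/negP => vFi; move: iv; rewrite -(hFi v vFi hvN) eqxx.
      have vd : v \in F2 :\: Fi by rewrite inE vFi vF2.
      have [y] := hM.2 F2 Fi F2B FiB v vd; rewrite inE => /andP [yF2 yFi] F3B.
      have yi : y = i.
        have [j jF3 Nj] := hNJ _ F3B.
        move: jF3; rewrite !inE => /orP [/andP [jv jF2] | /eqP jy].
          by move: jv; rewrite (hF2 j jF2 Nj) eqxx.
        by rewrite jy in Nj; exact: hFi y yFi Nj.
      exists ((F2 :\ v) :|: [set y]); rewrite -yi; split => //.
        by rewrite !inE eqxx orbT.
      apply/setP => z; rewrite !inE; case: (eqVneq z y) => [->|] /=.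
        by rewrite (negbTE yF2) andbF.
      by rewrite orbF.
    have := sB F3 F3B; rewrite (big_setD1 _ iF3) /= E3 => h.
    have := sL F2 gF2; have := hNsq i; move: h le.
    set Rs := \sum_(j in F2 :\ v) s j; set RL := \sum_(j in F2 :\ v) L j.
    lia.
move=> m' [s [ssq ssym sdv]] mdv.
have sle : forall i, s i <= L i + N i.
  by move=> i; have := mdv i; rewrite ffunE; exact: leq_trans (sdv i).
apply/ffunP => i; apply/eqP; rewrite eqn_leq; apply/andP; split; first exact: mdv i.
rewrite ffunE; exact: leq_trans (key s ssq ssym sle i) (sdv i).
Qed.
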